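(* Let $(S,\sqcup,\cap)$ be an ado-semilattice. Then for all $a,b,c\in S$: (1) $a\sqcup b=b\sqcup a$ if and only if $a$ and $b$ have an upper bound in $(S,\leq)$; (2) $a\cap((a\cap b)\sqcup c)=a\cap((a\cap c)\sqcup b)$.
   Context: An o-semilattice is an algebra $(L,\cap,\sqcup)$ such that $(L,\cap)$ is a semilattice and, with $x\leq y$ iff $x=x\cap y$, for all $x,y,z$: (i) $x\leq x\sqcup y$; (ii) $(x\cap y)\sqcup(y\cap z)\leq y$; (iii) $x\sqcup y\leq x\sqcup(y\cap(x\sqcup y))$; (iv) $x\cap z\leq(x\cap y)\sqcup z$. It is distributive if $(a\cap d)\sqcup((b\cap d)\cap(c\cap d))=((a\cap d)\sqcup(b\cap d))\cap((a\cap d)\sqcup(c\cap d))$ for all $a,b,c,d$. An ado-semilattice is a distributive o-semilattice in which $\sqcup$ is associative. Here $\leq$ is the semilattice order $x\leq y$ iff $x=x\cap y$. *)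

(* Defs.v *)
Section OSemilattice.
Variable L : Type.
Variables (meet join : L -> L -> L).

Definition is_semilattice : Prop :=
  (forall x y z, meet x (meet y z) = meet (meet x y) z) /\
  (forall x y, meet x y = meet y x) /\
  (forall x, meet x x = x).

Definition sle (x y : L) : Prop := x = meet x y.

Definition is_osemilattice : Prop :=
  is_semilattice /\
  (forall x y, sle x (join x y)) /\
  (forall x y z, sle (join (meet x y) (meet y z)) y) /\
  (forall x y, sle (join x y) (join x (meet y (join x y)))) /\
  (forall x y z, sle (meet x z) (join (meet x y) z)).

Definition is_distributive : Prop :=
  forall a b c d,
    join (meet a d) (meet (meet b d) (meet c d)) =
    meet (join (meet a d) (meet b d)) (join (meet a d) (meet c d)).

Definition is_ado_semilattice : Prop :=
  is_osemilattice /\ is_distributive /\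
  (forall x y z, join x (join y z) = join (join x y) z).

End OSemilattice.

Arguments sle {L} meet x y.
Arguments is_ado_semilattice {L} meet join.

(* Main.v *)
Require Import Defs.
From Stdlib Require Import Setoid.

Theorem lemma3p4 (S : Type) (meet join : S -> S -> S)
  (H : is_ado_semilattice meet join) :
  forall a b c : S,
    (join a b = join b a <->
       exists u : S, sle meet a u /\ sle meet b u) /\
    meet a (join (meet a b) c) = meet a (join (meet a c) b).
Proof.
  destruct H as [[[mA [mC mI]] [Hi [Hii [Hiii Hiv]]]] [Hd jA]].
  unfold sle in *.
  assert (anti : forall x y, x = meet x y -> y = meet y x -> x = y).
  { intros x y h1 h2. rewrite h1 at 1. rewrite mC. now rewrite <- h2. }
  assert (trans : forall x y z, x = meet x y -> y = meet y z -> x = meet x z).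
  { intros x y z h1 h2. rewrite h1 at 1. rewrite h2 at 1.
    rewrite mA. now rewrite <- h1. }
  assert (ml : forall x y, meet x y = meet (meet x y) x).
  { intros x y. rewrite (mC x y), <- mA, mI. reflexivity. }
  assert (mr : forall x y, meet x y = meet (meet x y) y).
  { intros x y. rewrite <- mA, mI. reflexivity. }
  assert (L1 : forall x y v, x = meet x v -> y = meet y v -> join x y = meet (join x y) v).
  { intros x y v h1 h2. pose proof (Hii x v y) as h. rewrite <- h1 in h.
    rewrite (mC v y), <- h2 in h. exact h. }
  assert (L2 : forall x y v, x = meet x v -> y = meet y v -> y = meet y (join x y)).
  { intros x y v h1 h2. pose proof (Hiv v x y) as h.
    rewrite (mC v x), <- h1, (mC v y), <- h2 in h. exact h. }
  assert (L3 : forall x y, x = meet x y -> join x y = y).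
  { intros x y h. apply anti.
    - apply L1; auto. 
    - apply (L2 x y y); auto. }
  assert (Jc : forall x y v, x = meet x v -> y = meet y v -> join x y = join y x).
  { intros x y v h1 h2. apply anti.
    - apply (L1 x y (join y x)); [apply (L2 y x v); auto | apply Hi].
    - apply (L1 y x (join x y)); [apply (L2 x y v); auto | apply Hi]. }
  assert (main : forall a b c, meet a (join (meet a b) c) = join (meet a b) (meet a c)).
  { intros a b c.
    set (P := meet a b). set (Q := meet a c). set (t := join P c).
    set (c' := meet c t).
    assert (ht : t = join P c').
    { apply anti.
      - apply Hiii.
      - apply L1; [apply Hi | apply mr]. }
    assert (hq : Q = meet Q t) by apply Hiv.
    assert (hP : P = meet P t) by apply Hi.
    assert (hc : c' = meet c' t) by apply mr.
    pose proof (Hd P a c' t) as D.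
    rewrite <- hP, <- hc in D.
    assert (e1 : meet (meet a t) c' = Q).
    { unfold c'. rewrite hq. unfold Q.
      rewrite <- !mA. rewrite (mC t (meet c t)), <- (mA c t t), mI. reflexivity. }
    rewrite e1 in D. rewrite <- ht in D.
    rewrite (L3 P (meet a t)) in D.
    - rewrite D. rewrite <- mA, mI. reflexivity.
    - unfold P. rewrite mA, <- ml. exact hP. }
  intros a b c. split.
  - split.
    + intros e. exists (join a b). split; [apply Hi|]. rewrite e. apply Hi.
    + intros [u [h1 h2]]. apply (Jc a b u); auto.
  - rewrite !main. apply (Jc _ _ a); apply ml.
Qed.
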